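(* Let $\lambda_{\operatorname{gr}}\ge0$ and let $X=(V,E,T)$ be an $(s,k,K)$-two layer system whose ground graph is a $\lambda_{\operatorname{gr}}$-expander. Let $A\subseteq E$ be non-empty, $0<\mu<1$, and $U\subseteq V$ a set of vertices that are $\mu$-large with respect to $A$. For $0\le i\le k$ let $A^i_U=\{\tau\in A:|\tau\cap U|=i\}$. If $\frac{w(A)}{w(E)}\le\frac{4\mu^2}{s^3(s-1)^2}$, then $$\frac{s(s-1)(k-1)}{2\mu}\lambda_{\operatorname{gr}}+\frac{s^3(s-1)^2}{4\mu^2}\frac{w(A)}{w(E)}\ge\left(1-\frac{s(s-1)(k-1)}{2\mu}\lambda_{\operatorname{gr}}\right)\sum_{i=2}^k(i-1)\frac{w(A^i_U)}{w(A)}.$$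
   Context: Let $s,k,K$ be positive integers. An $(s,k,K)$-two layer system is a triple $X=(V,E,T)$ where: $V$ is a finite set; $E\subseteq 2^V$ with $|\tau|=k$ for all $\tau\in E$ and $\bigcup_{\tau\in E}\tau=V$; $T\subseteq 2^E$ with $|\sigma|=K$ for all $\sigma\in T$ and $\bigcup_{\sigma\in T}\sigma=E$. Write $v\in\sigma$ if $v\in\tau$ for some $\tau\in\sigma$; it is required that $2\le|\{\tau\in\sigma:v\in\tau\}|\le s$ for all $\sigma\in T$, $v\in\sigma$ (so $s\ge2$). A positive $w:T\to\mathbb{R}_{>0}$ is fixed and extended by $w(\tau)=\sum_{\sigma\ni\tau}w(\sigma)$ ($\tau\in E$), $w(v)=\sum_{\sigma\in T,v\in\sigma}w(\sigma)$, $w(B)=\sum_{\eta\in B}w(\eta)$. For $v\in V$, $E_v=\{\tau\in E:v\in\tau\}$; the link of $v$ is the graph on $E_v$ where distinct $\tau_1,\tau_2$ are adjacent iff some $\sigma\in T$ contains both, with weight $m_v(\{\tau_1,\tau_2\})=\sum_{\sigma\in T,\tau_1,\tau_2\in\sigma}w(\sigma)$; $m_v(\tau)$ is the sum of weights of link edges at $\tau$, $m_v(B)=\sum_{\tau\in B}m_v(\tau)$. For $A\subseteq E$, $A_v=A\cap E_v$, and $v$ is $\mu$-large w.r.t. $A$ if $m_v(A_v)/m_v(E_v)\ge\mu$. The ground graph of $X$ has vertex set $V$, distinct $u,v$ adjacent iff some $\tau\in E$ contains both, with weight $m_{\operatorname{gr}}(\{u,v\})=\sum_{\tau\in E,u,v\in\tau}w(\tau)$.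 For a weighted graph $(V,E,m)$: $m(v)=\sum_{e\ni v}m(e)$, $m(U)=\sum_{v\in U}m(v)$, $m(U_1,U_2)=\sum_{(u_1,u_2)\in U_1\times U_2,\{u_1,u_2\}\in E}m(\{u_1,u_2\})$, $h_G=\min_{\emptyset\ne U\subsetneq V}\frac{m(U,V\setminus U)m(V)}{m(U)m(V\setminus U)}$; $G$ is a $\lambda$-expander if $1-h_G\le\lambda$. *)

(* Defs.v *)
From mathcomp Require Import all_boot all_order all_algebra.
Set Implicit Arguments. Unset Strict Implicit. Unset Printing Implicit Defensive.
Import Order.TTheory GRing.Theory Num.Theory.
Local Open Scope ring_scope.

Section Graphs.
Variables (R : realFieldType) (T : finType).
(* A weighted graph with vertex set W : {set T}; m u v is the weight of the
   edge {u,v} (0 when there is no edge); loops are never counted. *)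
Definition gdeg (m : T -> T -> R) (W : {set T}) (v : T) : R :=
  \sum_(u in W | u != v) m v u.
Definition gvol (m : T -> T -> R) (W U : {set T}) : R :=
  \sum_(v in U) gdeg m W v.
Definition gcut (m : T -> T -> R) (U1 U2 : {set T}) : R :=
  \sum_(u1 in U1) \sum_(u2 in U2 | u1 != u2) m u1 u2.
(* 1 - h_G <= lam, with h_G the minimum over nonempty proper U of the ratio *)
Definition is_expander (m : T -> T -> R) (W : {set T}) (lam : R) : Prop :=
  forall U : {set T}, U \subset W -> U != set0 -> U != W ->
    1 - gcut m U (W :\: U) * gvol m W W / (gvol m W U * gvol m W (W :\: U))
      <= lam.
End Graphs.

Section TwoLayer.
Variables (R : realFieldType) (V : finType).
Implicit Types (E : {set {set V}}) (T : {set {set {set V}}}).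

Definition in_face (v : V) (sigma : {set {set V}}) : bool :=
  [exists tau in sigma, v \in tau].

Definition two_layer_system (s k K : nat) E T : Prop :=
  [/\ (0 < s)%N, (0 < k)%N & (0 < K)%N] /\
  [/\ (forall tau, tau \in E -> #|tau| = k),
      \bigcup_(tau in E) tau = [set: V],
      (forall sigma, sigma \in T -> sigma \subset E /\ #|sigma| = K),
      \bigcup_(sigma in T) sigma = E &
      (forall sigma v, sigma \in T -> in_face v sigma ->
         (2 <= #|[set tau in sigma | v \in tau]| <= s)%N)].

Definition wE T (w : {set {set V}} -> R) (tau : {set V}) : R :=
  \sum_(sigma in T | tau \in sigma) w sigma.
Definition wV T (w : {set {set V}} -> R) (v : V) : R :=
  \sum_(sigma in T | in_face v sigma) w sigma.
Definition wS T (w : {set {set V}} -> R) (B : {set {set V}}) : R :=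
  \sum_(tau in B) wE T w tau.

Definition Ev E (v : V) : {set {set V}} := [set tau in E | v \in tau].

Definition link_w T (w : {set {set V}} -> R) (t1 t2 : {set V}) : R :=
  \sum_(sigma in T | (t1 \in sigma) && (t2 \in sigma)) w sigma.

Definition mv E T w (v : V) (B : {set {set V}}) : R :=
  gvol (link_w T w) (Ev E v) B.

Definition mu_large E T w (A : {set {set V}}) (mu : R) (v : V) : Prop :=
  mv E T w v (A :&: Ev E v) / mv E T w v (Ev E v) >= mu.

Definition gr_w E T w (u v : V) : R :=
  \sum_(tau in E | (u \in tau) && (v \in tau)) wE T w tau.

Definition A_iU (A : {set {set V}}) (U : {set V}) (i : nat) : {set {set V}} :=
  [set tau in A | #|tau :&: U| == i].
End TwoLayer.

(* Main.v *)
Require Import Defs.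
From mathcomp Require Import all_boot all_order all_algebra.
From mathcomp Require Import ring lra zify.
Import Order.TTheory GRing.Theory Num.Theory.
Local Open Scope ring_scope.
Set Implicit Arguments. Unset Strict Implicit.

Lemma swap_count (R : realFieldType) (I J : finType) (P : pred I) (Q : I -> J -> bool)
  (f : J -> R) :
  \sum_(i | P i) \sum_(j | Q i j) f j = \sum_j f j * #|[set i | P i && Q i j]|%:R.
Proof.
under eq_bigr do rewrite big_mkcond.
rewrite exchange_big /=; apply: eq_bigr => j _.
rewrite -big_mkcondr /= mulr_natr -sumr_const.
by apply: eq_bigl => i; rewrite inE.
Qed.

Lemma wE_ge0 (R : realFieldType) (V : finType) (T : {set {set {set V}}}) w t :
  (forall sigma, sigma \in T -> 0 < w sigma :> R) -> 0 <= wE T w t.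
Proof.
move=> hw; rewrite /wE; apply: sumr_ge0 => s /andP[sT _]; exact: ltW (hw _ sT).
Qed.

Lemma wE_gt0 (R : realFieldType) (V : finType) (E : {set {set V}}) (T : {set {set {set V}}}) w t :
  (forall sigma, sigma \in T -> 0 < w sigma :> R) ->
  \bigcup_(sigma in T) sigma = E -> t \in E -> 0 < wE T w t.
Proof.
move=> hw hU tE; rewrite -hU in tE; case/bigcupP: tE => sg sT tsg.
rewrite /wE (bigD1 sg) ?sT ?tsg //=; apply: ltr_wpDr; last exact: hw.
apply: sumr_ge0 => x /andP[/andP[xT _] _]; exact: ltW (hw _ xT).
Qed.


Lemma link_deg (R : realFieldType) (V : finType) (E : {set {set V}}) (T : {set {set {set V}}}) (w : {set {set V}} -> R) u t :
  (forall sigma, sigma \in T -> sigma \subset E) ->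
  gdeg (link_w T w) (Ev E u) t =
  \sum_(sg in T | t \in sg) w sg * #|[set t' in sg | u \in t'] :\ t|%:R.
Proof.
move=> hTE; rewrite /gdeg /link_w swap_count [RHS]big_mkcond /=.
apply: eq_bigr => sg _.
case: ifP => h; last first.
  rewrite (_ : [set _ | _] = set0) ?cards0 ?mulr0 //.
  apply/setP => x; rewrite !inE; apply/negbTE; apply/negP => /andP[_ /andP[a /andP[b _]]].
  by rewrite a b in h.
case/andP: h => sT tS.
congr (_ * _%:R); apply: eq_card => x; rewrite !inE sT tS /=.
case xS: (x \in sg); last by rewrite !andbF.
have xE : x \in E by exact: (subsetP (hTE _ sT)).
by rewrite xE /= andbT andbC.
Qed.

Lemma deg_bounds (V : finType) (T : {set {set {set V}}}) (s : nat) sg u t :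
  (forall sigma v, sigma \in T -> in_face v sigma ->
         (2 <= #|[set tau in sigma | v \in tau]| <= s)%N) ->
  sg \in T -> t \in sg -> u \in t ->
  (1 <= #|[set t' in sg | u \in t'] :\ t| /\ #|[set t' in sg | u \in t'] :\ t|.+1 <= s)%N.
Proof.
move=> hd sT tS ut.
have hf : in_face u sg by apply/existsP; exists t; rewrite tS ut.
have := hd _ _ sT hf; rewrite (cardsD1 t) !inE tS ut /=.
lia.
Qed.

Lemma mv_upper (R : realFieldType) (V : finType) (E : {set {set V}}) (T : {set {set {set V}}}) (w : {set {set V}} -> R) (s : nat) u (B : {set {set V}}) :
  (forall sigma, sigma \in T -> sigma \subset E) ->
  (forall sigma, sigma \in T -> 0 < w sigma) ->
  (forall sigma v, sigma \in T -> in_face v sigma ->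
         (2 <= #|[set tau in sigma | v \in tau]| <= s)%N) ->
  (forall t, t \in B -> u \in t) ->
  mv E T w u B <= (s%:R - 1) * \sum_(t in B) wE T w t.
Proof.
move=> hTE hw hd hB; rewrite /mv /gvol mulr_sumr; apply: ler_sum => t tB.
rewrite link_deg // /wE mulr_sumr; apply: ler_sum => sg /andP[sT tS].
rewrite [X in _ <= X]mulrC; apply: ler_wpM2l; first exact: ltW (hw _ sT).
have [_ h] := deg_bounds hd sT tS (hB _ tB).
rewrite lerBrDr -[1 in X in X <= _]/(1%:R) -natrD ler_nat addn1; exact: h.
Qed.

Lemma mv_lower (R : realFieldType) (V : finType) (E : {set {set V}}) (T : {set {set {set V}}}) (w : {set {set V}} -> R) (s : nat) u :
  (forall sigma, sigma \in T -> sigma \subset E) ->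
  (forall sigma, sigma \in T -> 0 < w sigma) ->
  (forall sigma v, sigma \in T -> in_face v sigma ->
         (2 <= #|[set tau in sigma | v \in tau]| <= s)%N) ->
  \sum_(t in Ev E u) wE T w t <= mv E T w u (Ev E u).
Proof.
move=> hTE hw hd; rewrite /mv /gvol; apply: ler_sum => t tB.
rewrite link_deg // /wE; apply: ler_sum => sg /andP[sT tS].
rewrite -[X in X <= _]mulr1; apply: ler_wpM2l; first exact: ltW (hw _ sT).
have ut : u \in t by move: tB; rewrite inE => /andP[].
have [h _] := deg_bounds hd sT tS ut.
by rewrite ler1n.
Qed.


Lemma gr_deg (R : realFieldType) (V : finType) (E : {set {set V}}) (T : {set {set {set V}}}) (w : {set {set V}} -> R) (k : nat) v :
  (0 < k)%N -> (forall tau, tau \in E -> #|tau| = k) ->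
  gdeg (gr_w E T w) [set: V] v = (k%:R - 1) * \sum_(t in E | v \in t) wE T w t.
Proof.
move=> k0 hk; rewrite /gdeg /gr_w swap_count mulr_sumr [RHS]big_mkcond /=.
apply: eq_bigr => t _; case: ifP => h; last first.
  rewrite (_ : [set _ | _] = set0) ?cards0 ?mulr0 //.
  apply/setP => x; rewrite !inE; apply/negbTE; apply/negP => /andP[_ /andP[a /andP[b _]]].
  by rewrite a b in h.
case/andP: h => tE vt.
rewrite mulrC; congr (_ * _).
rewrite (_ : [set _ | _] = t :\ v); last first.
  by apply/setP => x; rewrite !inE tE vt /= andbC.
have -> : #|t :\ v| = (k - 1)%N by move: (cardsD1 v t); rewrite vt hk /=; lia.
by rewrite natrB.
Qed.

Lemma gr_vol_all (R : realFieldType) (V : finType) (E : {set {set V}}) (T : {set {set {set V}}}) (w : {set {set V}} -> R) (k : nat) :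
  (0 < k)%N -> (forall tau, tau \in E -> #|tau| = k) ->
  gvol (gr_w E T w) [set: V] [set: V] = (k%:R - 1) * (k%:R * wS T w E).
Proof.
move=> k0 hk; rewrite /gvol.
under eq_bigr do rewrite (gr_deg _ _ _ k0 hk).
rewrite -mulr_sumr swap_count; congr (_ * _).
rewrite /wS mulr_sumr [RHS]big_mkcond /=; apply: eq_bigr => t _.
case: ifP => tE; last first.
  rewrite (_ : [set _ | _] = set0) ?cards0 ?mulr0 //.
  by apply/setP => x; rewrite !inE.
rewrite mulrC; congr (_ * _); rewrite -(hk _ tE); congr (_%:R); apply: eq_card => x.
by rewrite !inE.
Qed.

Lemma sum_cnt (R : realFieldType) (V : finType) (A : {set {set V}}) (T : {set {set {set V}}}) (w : {set {set V}} -> R) (U : {set V}) :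
  \sum_(u in U) \sum_(t in A | u \in t) wE T w t =
  \sum_(t in A) wE T w t * #|t :&: U|%:R.
Proof.
rewrite swap_count [RHS]big_mkcond /=; apply: eq_bigr => t _.
case: ifP => tA; last first.
  rewrite (_ : [set _ | _] = set0) ?cards0 ?mulr0 //.
  by apply/setP => x; rewrite !inE andbF.
congr (_ * _%:R); apply: eq_card => x; by rewrite !inE andbC.
Qed.

Lemma gr_internal (R : realFieldType) (V : finType) (E : {set {set V}}) (T : {set {set {set V}}}) (w : {set {set V}} -> R) (U : {set V}) :
  gcut (gr_w E T w) U U =
  \sum_(t in E) wE T w t * (#|t :&: U| * (#|t :&: U| - 1))%:R.
Proof.
rewrite /gcut /gr_w.
under eq_bigr do rewrite swap_count.
rewrite exchange_big [RHS]big_mkcond /=; apply: eq_bigr => t _.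
rewrite -mulr_sumr.
case: ifP => tE; last first.
  rewrite big1 ?mulr0 // => u _; rewrite (_ : [set _ | _] = set0) ?cards0 //.
  by apply/setP => x; rewrite !inE !andbF.
congr (_ * _); rewrite -natr_sum; congr (_%:R).
rewrite (bigID (fun u => u \in t)) /= [X in (_ + X)%N]big1 ?addn0; last first.
  move=> u /andP[_ ut]; rewrite (_ : [set _ | _] = set0) ?cards0 //.
  by apply/setP => x; rewrite !inE (negbTE ut) !andbF.
rewrite (eq_bigr (fun _ => (#|t :&: U| - 1)%N)); last first.
  move=> u /andP[uU ut]; rewrite (cardsD1 u (t :&: U)) !inE uU ut add1n subn1 /=.
  apply: eq_card => x; rewrite !inE; by case: (x \in U); case: (x \in t); rewrite (eq_sym u) ?andbT ?andbF.
rewrite (eq_bigl (fun i => i \in t :&: U)); last by move=> i; rewrite !inE andbC.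
by rewrite sum_nat_const.
Qed.


Lemma vol_split (R : realFieldType) (V : finType) (m : V -> V -> R) (U : {set V}) :
  gvol m [set: V] U = gcut m U U + gcut m U ([set: V] :\: U).
Proof.
rewrite /gvol /gcut -big_split /=; apply: eq_bigr => v vU.
rewrite /gdeg (bigID (fun u => u \in U)) /=; congr (_ + _); apply: eq_bigl => u;
  by rewrite !inE /= (eq_sym u) ?andbT // andbC.
Qed.

Lemma vol_compl (R : realFieldType) (V : finType) (m : V -> V -> R) (U : {set V}) :
  gvol m [set: V] ([set: V] :\: U) = gvol m [set: V] [set: V] - gvol m [set: V] U.
Proof.
rewrite /gvol [X in _ = X - _](bigID (fun u => u \in U)) /=.
have e1 : \sum_(i in [set: V] | i \in U) gdeg m [set: V] i = \sum_(v in U) gdeg m [set: V] v.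
  by apply: eq_bigl => u; rewrite !inE.
have e2 : \sum_(i in [set: V] | i \notin U) gdeg m [set: V] i = \sum_(v in [set: V] :\: U) gdeg m [set: V] v.
  by apply: eq_bigl => u; rewrite !inE andbT.
by rewrite e1 e2 addrC addrK.
Qed.

Lemma expander_use (R : realFieldType) (V : finType) (m : V -> V -> R) (U : {set V}) lam :
  (forall u v, 0 <= m u v) -> 0 <= lam ->
  is_expander m [set: V] lam ->
  gcut m U U * gvol m [set: V] [set: V] <=
  lam * gvol m [set: V] U * gvol m [set: V] [set: V] + gvol m [set: V] U ^+ 2.
Proof.
move=> m0 l0 hexp.
set I := gcut m U U; set C := gcut m U ([set: V] :\: U).
set M := gvol m [set: V] U; set mV := gvol m [set: V] [set: V].
have hM : M = I + C by rewrite /M vol_split.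
have C0 : 0 <= C by apply: sumr_ge0 => u _; apply: sumr_ge0 => v _.
have I0 : 0 <= I by apply: sumr_ge0 => u _; apply: sumr_ge0 => v _.
have hc : 0 <= mV - M.
  rewrite /mV /M -vol_compl; apply: sumr_ge0 => v _; apply: sumr_ge0 => u _; exact: m0.
have M0 : 0 <= M by rewrite hM addr_ge0.
case: (lerP 1 lam) => hl.
  have : I * mV <= lam * M * mV.
    apply: ler_wpM2r; first lra.
    rewrite hM; nra.
  have : 0 <= M ^+ 2 by rewrite sqr_ge0.
  lra.
case: (eqVneq U set0) => [U0|Un0].
  have -> : I = 0 by rewrite /I /gcut U0 big_set0.
  rewrite mul0r; apply: addr_ge0; last exact: sqr_ge0.
  by rewrite mulr_ge0 // ?mulr_ge0 // ; lra.
case: (eqVneq U [set: V]) => [UT|UnT].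
  have C00 : C = 0 by rewrite /C UT setDv /gcut; apply: big1 => u _; apply: big_pred0 => v; by rewrite inE.
  have hMV : M = mV by rewrite /M UT.
  rewrite hM C00 addr0 -hMV hM C00 addr0; nra.
have := hexp U (subsetT U) Un0 UnT.
rewrite -/C -/mV -/M vol_compl -/M -/mV.
case: (eqVneq (M * (mV - M)) 0) => [D0|Dn0].
  by rewrite D0 invr0 mulr0 subr0 => h; lra.
have Dp : 0 < M * (mV - M) by rewrite lt0r Dn0 mulr_ge0.
rewrite lerBlDr -lerBlDl ler_pdivlMr // => h.
have : (1 - lam) * (M * (mV - M)) <= C * mV by lra.
rewrite hM => h2.
have : 0 <= (1 - lam) * (I+C)^+2 by rewrite mulr_ge0 // ?sqr_ge0; lra.
nra.
Qed.


Lemma per_tau (R : realFieldType) (s n : nat) (g : R) :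
  (2 <= s)%N -> 0 <= g -> g * s%:R <= 1 ->
  (n - 1)%N%:R + g * (n%:R ^+ 2) <= (n * (n - 1))%N%:R + s%:R * g.
Proof.
move=> s2 g0 gs.
have S2 : 2 <= s%:R :> R by rewrite (ler_nat R 2 s).
case: n => [|n]; first by rewrite sub0n mul0n expr0n /= mulr0 addr0 add0r mulr_ge0 // ler0n.
rewrite subSS subn0 natrM -addn1 natrD.
set x := n%:R.
have x0 : 0 <= x by rewrite ler0n.
have h1 : 0 <= (x - 1) ^+ 2 by apply: sqr_ge0.
case: (lerP ((x+1)^+2) s%:R) => hxs.
  have : g * ((x+1)^+2 - s%:R) <= 0 by rewrite mulr_ge0_le0 // subr_le0.
  nra.
have : s%:R * g * ((x+1)^+2 - s%:R) <= (x+1)^+2 - s%:R.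
  rewrite -[X in _ <= X]mul1r; apply: ler_wpM2r; first lra.
  by rewrite mulrC.
nra.
Qed.

Lemma cs (R : realFieldType) (I : finType) (P : pred I) (a x : I -> R) :
  (forall i, P i -> 0 <= a i) -> 0 < \sum_(i | P i) a i ->
  (\sum_(i | P i) a i * x i) ^+ 2 <=
  (\sum_(i | P i) a i) * \sum_(i | P i) a i * x i ^+ 2.
Proof.
move=> a0 Wp.
set W := \sum_(i | P i) a i; set Px := \sum_(i | P i) a i * x i.
set S2 := \sum_(i | P i) a i * x i ^+ 2.
have h : 0 <= \sum_(i | P i) a i * (x i * W - Px) ^+ 2.
  by apply: sumr_ge0 => i Pi; rewrite mulr_ge0 ?sqr_ge0 ?a0.
have e : \sum_(i | P i) a i * (x i * W - Px) ^+ 2 =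
   W ^+ 2 * S2 - 2 * W * Px * Px + Px ^+ 2 * W.
  rewrite (eq_bigr (fun i => W^+2 * (a i * x i ^+2) - (2*W*Px) * (a i * x i) + Px^+2 * a i)); last by move=> i _; ring.
  by rewrite big_split sumrB /= -!mulr_sumr.
rewrite e in h.
have : 0 <= W * (W * S2 - Px ^+ 2) by move: h; congr (_ <= _); ring.
rewrite pmulr_rge0 // subr_ge0 //.
Qed.

Lemma final_alg (R : realFieldType) (S Kr mu lam W WE M P Q Sw : R) :
  2 <= S -> 2 <= Kr -> 0 < mu -> 0 <= lam -> 0 < W -> W <= WE ->
  0 <= M -> 0 <= P -> 0 <= Sw ->
  mu * M <= (Kr - 1) * (S - 1) * P ->
  Q * ((Kr - 1) * (Kr * WE)) <= lam * M * ((Kr - 1) * (Kr * WE)) + M ^+ 2 ->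
  P ^+ 2 <= W * (Q + P) ->
  (forall g, 0 <= g -> g * S <= 1 -> Sw + g * (Q + P) <= Q + S * g * W) ->
  P <= W + Sw ->
  W / WE <= 4 * mu ^+ 2 / (S ^+ 3 * (S - 1) ^+ 2) ->
  (S * (S - 1) * (Kr - 1)) / (2 * mu) * lam
    + (S ^+ 3 * (S - 1) ^+ 2) / (4 * mu ^+ 2) * (W / WE)
  >= (1 - (S * (S - 1) * (Kr - 1)) / (2 * mu) * lam) * (Sw / W).
Proof.
move=> S2 K2 mu0 l0 W0 WWE M0 P0 Sw0 hM hQ hCS hg hP ha.
have WE0 : 0 < WE by exact: (lt_le_trans W0 WWE).
set c0 := (Kr - 1) * (S - 1) / mu.
set c := S * (S - 1) * (Kr - 1) / (2 * mu).
set h := S ^+ 2 * (S - 1) ^+ 2 / (4 * mu ^+ 2 * WE).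
set D := S ^+ 3 * (S - 1) ^+ 2 / (4 * mu ^+ 2).
have c00 : 0 <= c0 by rewrite /c0 divr_ge0 ?mulr_ge0 //; lra.
have hMc : M <= c0 * P.
  by rewrite /c0 mulrAC ler_pdivlMr // mulrC.
have hcc : c0 <= c.
  rewrite /c /c0 invfM mulrA ler_pM2r ?invr_gt0 //.
  have : 0 <= (Kr - 1) * (S - 1) by rewrite mulr_ge0 //; lra.
  nra.
have h0 : 0 <= h by rewrite /h divr_ge0 ?mulr_ge0 ?sqr_ge0 //; lra.
have mV0 : 0 < (Kr - 1) * (Kr * WE) by rewrite mulr_gt0 ?mulr_gt0 //; lra.
have hc0h : c0 ^+ 2 <= h * ((Kr - 1) * (Kr * WE)).
  rewrite /c0 /h.
  have -> : ((Kr - 1) * (S - 1) / mu) ^+ 2 = (Kr - 1) ^+ 2 * (S - 1) ^+ 2 / mu ^+ 2.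
    by field; lra.
  have -> : S ^+ 2 * (S - 1) ^+ 2 / (4 * mu ^+ 2 * WE) * ((Kr - 1) * (Kr * WE))
     = S ^+ 2 * (S - 1) ^+ 2 * ((Kr - 1) * Kr) / 4 / mu ^+ 2.
    by field; apply/andP; split; lra.
  rewrite ler_pM2r ?invr_gt0 ?exprn_gt0 //.
  rewrite ler_pdivlMr; last lra.
  have a1 : 0 <= (S - 1) ^+ 2 by apply: sqr_ge0.
  have a2 : 0 <= (Kr - 1) by lra.
  have a3 : 4 <= S ^+ 2 by nra.
  have : (Kr - 1) * 4 <= Kr * S ^+ 2 by nra.
  have : 0 <= (Kr - 1) * (S - 1) ^+ 2 by rewrite mulr_ge0.
  nra.
have hQ2 : Q <= lam * c0 * P + h * P ^+ 2.
  rewrite -(ler_pM2r mV0).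
  apply: (le_trans hQ).
  have e1 : lam * M * ((Kr - 1) * (Kr * WE)) <= lam * c0 * P * ((Kr - 1) * (Kr * WE)).
    rewrite ler_pM2r // -mulrA ler_wpM2l //.
  have e2 : M ^+ 2 <= h * P ^+ 2 * ((Kr - 1) * (Kr * WE)).
    apply: (le_trans (y := (c0 * P) ^+ 2)).
      by rewrite lerXn2r // ?nnegrE // mulr_ge0.
    have -> : h * P ^+ 2 * ((Kr - 1) * (Kr * WE)) = (h * ((Kr - 1) * (Kr * WE))) * P ^+ 2 by ring.
    rewrite exprMn; apply: ler_wpM2r; first exact: sqr_ge0.
    exact: hc0h.
  lra.
have gS : h * W * S <= 1.
  have -> : h * W * S = D * (W / WE) by rewrite /h /D; field; apply/andP; split; lra.
  have Dp : 0 < D by rewrite /D divr_gt0 ?mulr_gt0 ?exprn_gt0 //; lra.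
  have -> : 1 = D * (4 * mu ^+ 2 / (S ^+ 3 * (S - 1) ^+ 2)).
    by rewrite /D; field; apply/andP; split; lra.
  by rewrite ler_pM2l.
have hg1 := hg (h * W) (mulr_ge0 h0 (ltW W0)) gS.
have hCS2 : h * P ^+ 2 <= h * W * (Q + P) by rewrite -mulrA ler_wpM2l.
have hSw : Sw <= lam * c0 * (W + Sw) + D * (W / WE) * W.
  have -> : D * (W / WE) * W = S * (h * W) * W by rewrite /D /h; field; apply/andP; split; lra.
  have : lam * c0 * P <= lam * c0 * (W + Sw) by rewrite ler_wpM2l // mulr_ge0.
  lra.
have hSw2 : Sw <= c * lam * (W + Sw) + D * (W / WE) * W.
  have : lam * c0 * (W + Sw) <= c * lam * (W + Sw).
    rewrite [c * lam]mulrC; apply: ler_wpM2r; first lra.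
    by rewrite ler_wpM2l.
  lra.
rewrite -(ler_pM2r W0).
have -> : (1 - c * lam) * (Sw / W) * W = (1 - c * lam) * Sw by field; lra.
have -> : (c * lam + D * (W / WE)) * W = c * lam * W + D * (W / WE) * W by ring.
lra.
Qed.


Lemma large_u (R : realFieldType) (V : finType) (E : {set {set V}}) (T : {set {set {set V}}}) (w : {set {set V}} -> R) (s : nat) (A : {set {set V}}) mu u :
  (forall sigma, sigma \in T -> sigma \subset E) ->
  (forall sigma, sigma \in T -> 0 < w sigma) ->
  (forall sigma v, sigma \in T -> in_face v sigma ->
         (2 <= #|[set tau in sigma | v \in tau]| <= s)%N) ->
  A \subset E -> 0 < mu -> mu_large E T w A mu u ->
  mu * \sum_(t in E | u \in t) wE T w t <= (s%:R - 1) * \sum_(t in A | u \in t) wE T w t.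
Proof.
move=> hTE hw hd AE mu0 hl.
have lo := mv_lower u hTE hw hd.
have up := @mv_upper R V E T w s u (A :&: Ev E u) hTE hw hd.
have hB : forall t, t \in A :&: Ev E u -> u \in t by move=> t; rewrite !inE => /andP[_ /andP[]].
have {up} up := up hB.
have e1 : \sum_(t in Ev E u) wE T w t = \sum_(t in E | u \in t) wE T w t.
  by apply: eq_bigl => t; rewrite !inE.
have e2 : \sum_(t in A :&: Ev E u) wE T w t = \sum_(t in A | u \in t) wE T w t.
  apply: eq_bigl => t; rewrite !inE.
  case tA: (t \in A) => //=; by rewrite (subsetP AE _ tA).
rewrite e1 in lo; rewrite e2 in up.
have z0 : 0 <= \sum_(t in E | u \in t) wE T w t by apply: sumr_ge0 => t _; exact: wE_ge0.
move: hl; rewrite /mu_large.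
set a := mv E T w u (A :&: Ev E u) in up *; set b := mv E T w u (Ev E u) in lo *.
case: (eqVneq b 0) => [b0|bn0].
  by rewrite b0 invr0 mulr0 => h; lra.
have bp : 0 < b by rewrite lt0r bn0 /=; exact: le_trans z0 lo.
rewrite ler_pdivlMr // => h.
have : mu * \sum_(t in E | u \in t) wE T w t <= mu * b by rewrite ler_pM2l.
lra.
Qed.

Lemma nat_sq (R : realFieldType) (n : nat) : (n * (n - 1))%N%:R + n%:R = n%:R ^+ 2 :> R.
Proof.
case: n => [|n]; first by rewrite mul0n expr0n /= addr0.
rewrite subSS subn0 natrM -addn1 natrD; ring.
Qed.

Lemma nat_le1 (R : realFieldType) (n : nat) : n%:R <= 1 + (n - 1)%N%:R :> R.
Proof.
case: n => [|n]; first by rewrite sub0n addr0 ler01.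
by rewrite subSS subn0 -addn1 natrD addrC.
Qed.


Lemma sub_sum (R : realFieldType) (I : finType) (A E : {set I}) (f : I -> R) :
  A \subset E -> (forall t, 0 <= f t) ->
  \sum_(t in A) f t <= \sum_(t in E) f t.
Proof.
move=> AE f0; rewrite [X in _ <= X](big_setID A) /= (setIidPr AE) lerDl.
by apply: sumr_ge0.
Qed.

Lemma conv_sum (R : realFieldType) (V : finType) (T : {set {set {set V}}}) (w : {set {set V}} -> R) (k : nat) (A : {set {set V}}) (U : {set V}) :
  (forall t, t \in A -> (#|t :&: U| <= k)%N) ->
  \sum_(2 <= i < k.+1) (i%:R - 1) * wS T w (A_iU A U i) =
  \sum_(t in A) wE T w t * (#|t :&: U| - 1)%N%:R.
Proof.
move=> hk.
have e : forall i, (i%:R - 1) * wS T w (A_iU A U i) =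
   \sum_(t in A) (if #|t :&: U| == i then wE T w t * (i%:R - 1) else 0).
  move=> i; rewrite -big_mkcondr /= mulr_sumr /wS.
  by apply: eq_big => [t|t _]; [rewrite !inE | rewrite mulrC].
under eq_bigr do rewrite e.
rewrite exchange_big /=; apply: eq_bigr => t tA.
rewrite -big_mkcondr /=.
rewrite (eq_bigl (fun i => i == #|t :&: U|)); last by move=> i; rewrite eq_sym.
rewrite big_nat1_eq.
case: ifP => h.
  case/andP: h => h2 _; rewrite natrB //; lia.
have : ~~ (2 <= #|t :&: U|)%N.
  apply/negP => h2; move: h; rewrite h2 /= ltnS hk //.
move=> /negP h3.
have -> : (#|t :&: U| - 1 = 0)%N by lia.
by rewrite mulr0.
Qed.

Unset Implicit Arguments.

Theorem lemma4p9 (R : realFieldType) (V : finType) (s k K : nat)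
    (E : {set {set V}}) (T : {set {set {set V}}}) (w : {set {set V}} -> R)
    (lam mu : R) (A : {set {set V}}) (U : {set V}) :
  two_layer_system s k K E T ->
  (forall sigma, sigma \in T -> 0 < w sigma) ->
  0 <= lam ->
  is_expander (gr_w E T w) [set: V] lam ->
  A \subset E -> A != set0 ->
  0 < mu -> mu < 1 ->
  (forall u, u \in U -> mu_large E T w A mu u) ->
  wS T w A / wS T w E <= 4 * mu ^+ 2 / (s%:R ^+ 3 * (s%:R - 1) ^+ 2) ->
  (s%:R * (s%:R - 1) * (k%:R - 1)) / (2 * mu) * lam
    + (s%:R ^+ 3 * (s%:R - 1) ^+ 2) / (4 * mu ^+ 2) * (wS T w A / wS T w E)
  >= (1 - (s%:R * (s%:R - 1) * (k%:R - 1)) / (2 * mu) * lam)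
     * \sum_(2 <= i < k.+1) (i%:R - 1) * (wS T w (A_iU A U i) / wS T w A).
Proof.
move=> [[s0 k0 K0] [hk hVcov hT hEcov hd]] hw l0 hexp AE An0 mu0 mu1 hlarge ha.
have hTE : forall sg, sg \in T -> sg \subset E by move=> sg /hT [].
have wE0 : forall t, 0 <= wE T w t by move=> t; exact: wE_ge0.
have [t0 t0A] : exists t, t \in A.
  by case/set0Pn: An0 => t tA; exists t.
have t0E : t0 \in E := subsetP AE _ t0A.
have s2 : (2 <= s)%N.
  have := t0E; rewrite -hEcov => /bigcupP [sg sT tS].
  have : (0 < #|t0|)%N by rewrite hk.
  case/card_gt0P => u ut.
  have [h1 h2] := deg_bounds hd sT tS ut.
  lia.
have S2 : 2 <= s%:R :> R by rewrite (ler_nat R 2 s).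
set W := wS T w A; set WE := wS T w E.
have W0 : 0 < W.
  rewrite /W /wS (bigD1 t0) //=.
  have h1 := wE_gt0 hw hEcov t0E.
  have h2 : 0 <= \sum_(i in A | i != t0) wE T w i by apply: sumr_ge0.
  lra.
have WWE : W <= WE by apply: sub_sum.
have WE0 : 0 < WE by exact: (lt_le_trans W0 WWE).
have nk : forall t, t \in A -> (#|t :&: U| <= k)%N.
  move=> t tA; rewrite -(hk t (subsetP AE _ tA)); apply: subset_leq_card; exact: subsetIl.
rewrite (eq_bigr (fun i => ((i%:R - 1) * wS T w (A_iU A U i)) / W)); last by move=> i _; rewrite mulrA.
rewrite -mulr_suml conv_sum //.
set Sw := \sum_(t in A) wE T w t * (#|t :&: U| - 1)%N%:R.
have Sw0 : 0 <= Sw by apply: sumr_ge0 => t _; rewrite mulr_ge0.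
case: (leqP k 1) => hk1.
  have Sw00 : Sw = 0.
    apply: big1 => t tA; have := nk t tA.
    move=> h; have -> : (#|t :&: U| - 1 = 0)%N.
      apply/eqP; rewrite subn_eq0; exact: leq_trans h hk1.
    by rewrite mulr0.
  have -> : k = 1%N by apply/eqP; rewrite eqn_leq hk1 k0.
  rewrite Sw00 subrr !(mulr0, mul0r, subr0, add0r).
  apply: mulr_ge0; last by apply: divr_ge0; exact: ltW.
  apply: divr_ge0; first by rewrite mulr_ge0 ?exprn_ge0 //; lra.
  by rewrite mulr_ge0 ?exprn_ge0 //; lra.
have K2 : 2 <= k%:R :> R by rewrite (ler_nat R 2 k).
set P := \sum_(t in A) wE T w t * #|t :&: U|%:R.
set Q := \sum_(t in A) wE T w t * (#|t :&: U| * (#|t :&: U| - 1))%N%:R.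
set M := gvol (gr_w E T w) [set: V] U.
have P0 : 0 <= P by apply: sumr_ge0 => t _; rewrite mulr_ge0.
have gr0 : forall u v, 0 <= gr_w E T w u v.
  by move=> u v; apply: sumr_ge0 => t _; exact: wE0.
have M0 : 0 <= M by apply: sumr_ge0 => v _; apply: sumr_ge0 => u _; exact: gr0.
have hM : mu * M <= (k%:R - 1) * (s%:R - 1) * P.
  rewrite /M /gvol.
  under eq_bigr do rewrite (@gr_deg R V E T w k _ k0 hk).
  rewrite -mulr_sumr mulrCA -[(k%:R - 1) * (s%:R - 1) * P]mulrA.
  apply: ler_wpM2l; first lra.
  rewrite /P -sum_cnt mulr_sumr mulr_sumr; apply: ler_sum => u uU.
  exact: large_u hTE hw hd AE mu0 (hlarge u uU).
have mV : gvol (gr_w E T w) [set: V] [set: V] = (k%:R - 1) * (k%:R * WE).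
  by rewrite (@gr_vol_all R V E T w k k0 hk).
have mV0 : 0 <= (k%:R - 1) * (k%:R * WE) by rewrite mulr_ge0 ?mulr_ge0 //; lra.
have hQ : Q * ((k%:R - 1) * (k%:R * WE)) <= lam * M * ((k%:R - 1) * (k%:R * WE)) + M ^+ 2.
  have := @expander_use R V (gr_w E T w) U lam gr0 l0 hexp.
  rewrite mV -/M; apply: le_trans; apply: ler_wpM2r => //.
  rewrite gr_internal /Q; apply: sub_sum => // t; rewrite mulr_ge0 //.
have hCS : P ^+ 2 <= W * (Q + P).
  have := @cs R _ (fun t => t \in A) (wE T w) (fun t => #|t :&: U|%:R) (fun t _ => wE0 t) W0.
  rewrite -/W -/P; congr (_ <= _ * _).
  rewrite /Q /P -big_split /=; apply: eq_bigr => t _; by rewrite -mulrDr nat_sq.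
have hg : forall g, 0 <= g -> g * s%:R <= 1 -> Sw + g * (Q + P) <= Q + s%:R * g * W.
  move=> g g0 gs.
  rewrite /Sw /Q /P /W /wS -big_split /= mulr_sumr -big_split /= mulr_sumr -big_split /=.
  apply: ler_sum => t _.
  have h := per_tau #|t :&: U| s2 g0 gs.
  rewrite -nat_sq in h.
  have e1 : wE T w t * (#|t :&: U| - 1)%N%:R + g * (wE T w t * (#|t :&: U| * (#|t :&: U| - 1))%N%:R + wE T w t * #|t :&: U|%:R) = wE T w t * ((#|t :&: U| - 1)%N%:R + g * ((#|t :&: U| * (#|t :&: U| - 1))%N%:R + #|t :&: U|%:R)) by ring.
  have e2 : wE T w t * (#|t :&: U| * (#|t :&: U| - 1))%N%:R + s%:R * g * wE T w t = wE T w t * ((#|t :&: U| * (#|t :&: U| - 1))%N%:R + s%:R * g) by ring.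
  by rewrite e1 e2 ler_wpM2l.
have hP : P <= W + Sw.
  rewrite /P /W /Sw /wS -big_split /=; apply: ler_sum => t _.
  by rewrite -[X in _ <= X + _]mulr1 -mulrDr ler_wpM2l // nat_le1.
exact: (final_alg S2 K2 mu0 l0 W0 WWE M0 P0 Sw0 hM hQ hCS hg hP ha).
Qed.
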